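(* Let $K$ be a discrete hypergroup, let $\mu$ be the left Haar measure on $K$ given by $\mu(\{x\})=\dfrac{1}{(\delta_x*\delta_{x^-})(\{e\})}$ for $x\in K$, and let $p\geq1$. Then for each $g\in L^p(K,\mu)$, the set $$\big\{f\in L^p(K,\mu):\ |f|\geq|g|\big\}$$ is not $\sigma$-porous in $L^p(K,\mu)$.
   Context: A locally compact hypergroup is a locally compact Hausdorff space $K$ together with a bilinear, positive-continuous map $(\mu,\nu)\mapsto\mu*\nu$ on the space $\mathbb M(K)$ of regular complex Borel measures and an involutive homeomorphism $x\mapsto x^-$ of $K$ such that: (i) $(\mathbb M(K),* )$ is a complex associative algebra; (ii) for $x,y\in K$, $\delta_x*\delta_y$ is a probability measure with compact support ($\delta_x$ = Dirac measure); (iii) $(x,y)\mapsto\operatorname{supp}(\delta_x*\delta_y)$ is continuous into the nonempty compact subsets of $K$ with the Michael topology; (iv) there is $e\in K$ with $\delta_x*\delta_e=\delta_e*\delta_x=\delta_x$ for all $x$; (v) $e\in\operatorname{supp}(\delta_x*\delta_y)$ iff $x=y^-$. $K$ is discrete if its topology is discrete. Porosity: Let $X$ be a metric space and $0<\lambda<1$. A set $E\subseteq X$ is $\lambda$-porous at $x\in E$ if for each $\delta>0$ there is $y\in B(x;\delta)\setminus\{x\}$ with $B(y;\lambda\, d(x,y))\cap E=\varnothing$; $E$ is $\lambda$-porous if it is $\lambda$-porous at each of its points; $E$ is $\sigma$-$\lambda$-porous if it is a countable union of $\lambda$-porous subsets of $X$. A set is called $\sigma$-porous if it is $\sigma$-$\lambda$-porous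 for some $\lambda\in(0,1)$; ''not $\sigma$-porous'' means not $\sigma$-$\lambda$-porous for any $\lambda\in(0,1)$. *)

(* Defs.v *)
From Stdlib Require Import Reals List Classical.
From Coquelicot Require Import Coquelicot.
Open Scope R_scope.

Definition lsum {K : Type} (f : K -> R) (s : list K) : R :=
  fold_right (fun x acc => f x + acc) 0 s.

Definition has_fsum {K : Type} (f : K -> R) (v : R) : Prop :=
  exists s : list K, NoDup s /\ (forall z, f z <> 0 -> In z s) /\ lsum f s = v.

(** On a discrete space, a regular complex Borel measure
    is an l^1 function, and the convolution is determined (by bilinearity and
    continuity) by the point-mass convolutions delta_x * delta_y, which are
    compactly (= finitely) supported probability measures; [conv x y z] is the
    mass of delta_x * delta_y at z. *)
Record DiscreteHypergroup (K : Type) := {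
  conv : K -> K -> K -> R;
  hinv : K -> K;
  hid : K;
  conv_ge0 : forall x y z, 0 <= conv x y z;
  conv_prob : forall x y, has_fsum (conv x y) 1;
  (* (i): associativity of the convolution algebra (on point masses) *)
  conv_assoc : forall x y z w, exists v,
      has_fsum (fun u => conv x y u * conv u z w) v /\
      has_fsum (fun u => conv y z u * conv x u w) v;
  conv_id_r : forall x, conv x hid x = 1 /\ (forall z, z <> x -> conv x hid z = 0);
  conv_id_l : forall x, conv hid x x = 1 /\ (forall z, z <> x -> conv hid x z = 0);
  hinv_invol : forall x, hinv (hinv x) = x;
  conv_e_supp : forall x y, conv x y hid <> 0 <-> x = hinv y
}.
Arguments conv {K} _ _ _ _.
Arguments hinv {K} _ _.
Arguments hid {K} _.

Definition haar {K : Type} (H : DiscreteHypergroup K) (x : K) : R :=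
  / conv H x (hinv H x) (hid H).

Definition rpow (a p : R) : R :=
  if Req_EM_T a 0 then 0 else Rpower a p.

Definition lp_partial {K : Type} (mu : K -> R) (p : R) (f : K -> C) (r : R) : Prop :=
  exists s : list K, NoDup s /\ r = lsum (fun x => rpow (Cmod (f x)) p * mu x) s.

Definition in_Lp {K : Type} (mu : K -> R) (p : R) (f : K -> C) : Prop :=
  exists M : R, forall r, lp_partial mu p f r -> r <= M.

Definition lp_sum {K : Type} (mu : K -> R) (p : R) (f : K -> C) : R :=
  real (Lub_Rbar (lp_partial mu p f)).

Definition lp_norm {K : Type} (mu : K -> R) (p : R) (f : K -> C) : R :=
  rpow (lp_sum mu p f) (/ p).

Definition lp_dist {K : Type} (mu : K -> R) (p : R) (f g : K -> C) : R :=
  lp_norm mu p (fun x => Cminus (f x) (g x)).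

Section Porosity.
Context {A : Type} (X : A -> Prop) (d : A -> A -> R).

Definition porous_at (lam : R) (E : A -> Prop) (x : A) : Prop :=
  forall delta, 0 < delta ->
    exists y, X y /\ y <> x /\ d x y < delta /\
      (forall z, X z -> d y z < lam * d x y -> ~ E z).

Definition porous (lam : R) (E : A -> Prop) : Prop :=
  (forall x, E x -> X x) /\ (forall x, E x -> porous_at lam E x).

Definition sigma_porous (lam : R) (E : A -> Prop) : Prop :=
  exists En : nat -> A -> Prop,
    (forall n, porous lam (En n)) /\
    (forall x, E x <-> exists n, En n x).
End Porosity.

(* Main.v *)
Require Import Defs.
From Stdlib Require Import Reals List Lra Lia Classical FunctionalExtensionality ClassicalEpsilon.
From Coquelicot Require Import Coquelicot.
Open Scope R_scope.

Lemma exp_le_mono x y : x <= y -> exp x <= exp y.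
Proof. intros [H|H]; [left; apply exp_increasing; auto | subst; lra]. Qed.

Lemma rpow_0 q : rpow 0 q = 0.
Proof. unfold rpow; destruct (Req_EM_T 0 0); [auto|congruence]. Qed.

Lemma rpow_pos a q : 0 < a -> 0 < rpow a q.
Proof. intros. unfold rpow; destruct (Req_EM_T a 0). lra. unfold Rpower; apply exp_pos. Qed.

Lemma rpow_ge0 a q : 0 <= rpow a q.
Proof. unfold rpow; destruct (Req_EM_T a 0). lra. unfold Rpower; left; apply exp_pos. Qed.

Lemma rpow_le a b q : 0 < q -> 0 <= a <= b -> rpow a q <= rpow b q.
Proof.
  intros Hq [Ha Hab]. destruct (Req_EM_T a 0) as [->|Ha0].
  - rewrite rpow_0; apply rpow_ge0.
  - unfold rpow. destruct (Req_EM_T a 0); [congruence|].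
    destruct (Req_EM_T b 0); [lra|]. apply Rle_Rpower_l; lra.
Qed.

Lemma rpow_lt a b q : 0 < q -> 0 <= a < b -> rpow a q < rpow b q.
Proof.
  intros Hq [Ha Hab]. destruct (Req_EM_T a 0) as [->|Ha0].
  - rewrite rpow_0; apply rpow_pos; lra.
  - unfold rpow. destruct (Req_EM_T a 0); [congruence|].
    destruct (Req_EM_T b 0); [lra|]. apply Rlt_Rpower_l; lra.
Qed.

Lemma rpow_lt_rev a b q : 0 < q -> 0 <= a -> 0 <= b -> rpow a q < rpow b q -> a < b.
Proof.
  intros Hq Ha Hb H. destruct (Rlt_le_dec a b) as [|Hba]; auto.
  assert (rpow b q <= rpow a q) by (apply rpow_le; lra). lra.
Qed.

Lemma rpow_le_rev a b q : 0 < q -> 0 <= a -> 0 <= b -> rpow a q <= rpow b q -> a <= b.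
Proof.
  intros Hq Ha Hb H. destruct (Rle_lt_dec a b) as [|Hba]; auto.
  assert (rpow b q < rpow a q) by (apply rpow_lt; lra). lra.
Qed.

Lemma rpow_mult a b q : 0 <= a -> 0 <= b -> rpow (a * b) q = rpow a q * rpow b q.
Proof.
  intros Ha Hb. destruct (Req_EM_T a 0) as [->|Ha0].
  { rewrite Rmult_0_l, !rpow_0; ring. }
  destruct (Req_EM_T b 0) as [->|Hb0].
  { rewrite Rmult_0_r, !rpow_0; ring. }
  unfold rpow. destruct (Req_EM_T (a*b) 0) as [e|_].
  { apply Rmult_integral in e; tauto. }
  destruct (Req_EM_T a 0); [congruence|]. destruct (Req_EM_T b 0); [congruence|].
  rewrite Rpower_mult_distr; auto; lra.
Qed.

Lemma rpow_inv a q : 0 < q -> 0 <= a -> rpow (rpow a q) (/ q) = a.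
Proof.
  intros Hq Ha. destruct (Req_EM_T a 0) as [->|Ha0].
  { rewrite !rpow_0; auto. }
  unfold rpow at 2. destruct (Req_EM_T a 0); [congruence|].
  unfold rpow. destruct (Req_EM_T (Rpower a q) 0) as [e|_].
  { exfalso. unfold Rpower in e. pose proof (exp_pos (q * ln a)); lra. }
  rewrite Rpower_mult, Rinv_r by lra. apply Rpower_1; lra.
Qed.

Lemma rpow_inv' a q : 0 < q -> 0 <= a -> rpow (rpow a (/ q)) q = a.
Proof.
  intros Hq Ha. rewrite <- (Rinv_inv q) at 2. apply rpow_inv; auto.
  apply Rinv_0_lt_compat; auto.
Qed.

Lemma rpow_small e q : 1 <= q -> 0 <= e <= 1 -> rpow e q <= e.
Proof.
  intros Hq [He0 He1]. destruct (Req_EM_T e 0) as [->|Hne].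
  { rewrite rpow_0; lra. }
  unfold rpow. destruct (Req_EM_T e 0); [congruence|].
  assert (Hl : ln e <= 0).
  { destruct He1 as [He1|He1]. rewrite <- ln_1. left; apply ln_increasing; lra.
    subst; rewrite ln_1; lra. }
  unfold Rpower. rewrite <- (exp_ln e) at 2 by lra. apply exp_le_mono. nra.
Qed.

Lemma rpow_one_exp a : 0 <= a -> rpow a 1 = a.
Proof. intros. destruct (Req_EM_T a 0) as [->|]. apply rpow_0.
  unfold rpow. destruct (Req_EM_T a 0); [congruence|]. apply Rpower_1; lra. Qed.

Lemma rpow_max_le a b q : 0 < q -> 0 <= a -> 0 <= b -> rpow (Rmax a b) q <= rpow a q + rpow b q.
Proof.
  intros. unfold Rmax. destruct (Rle_dec a b); pose proof (rpow_ge0 a q); pose proof (rpow_ge0 b q); lra.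
Qed.

Definition Qc (p : R) := rpow 2 p.

Lemma Qc_ge1 p : 1 <= p -> 1 <= Qc p.
Proof.
  intros. unfold Qc. apply Rle_trans with (rpow 2 1). rewrite rpow_one_exp; lra.
  unfold rpow. destruct (Req_EM_T 2 0); [lra|]. apply Rle_Rpower; lra.
Qed.

Lemma rpow_quasi a b p : 1 <= p -> 0 <= a -> 0 <= b ->
  rpow (a + b) p <= Qc p * (rpow a p + rpow b p).
Proof.
  intros Hp Ha Hb.
  assert (H1 : rpow (a + b) p <= rpow (2 * Rmax a b) p).
  { apply rpow_le. lra. split. lra. unfold Rmax; destruct (Rle_dec a b); lra. }
  rewrite rpow_mult in H1 by (try lra; unfold Rmax; destruct (Rle_dec a b); lra).
  pose proof (rpow_max_le a b p ltac:(lra) Ha Hb).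
  pose proof (Qc_ge1 p Hp). unfold Qc in *. nra.
Qed.

Lemma lsum_nil {K} (f : K -> R) : lsum f nil = 0.
Proof. reflexivity. Qed.
Lemma lsum_cons {K} (f : K -> R) a s : lsum f (a :: s) = f a + lsum f s.
Proof. reflexivity. Qed.

Lemma lsum_le {K} (f g : K -> R) s : (forall x, In x s -> f x <= g x) -> lsum f s <= lsum g s.
Proof.
  induction s; simpl; intros. lra.
  pose proof (H a (or_introl eq_refl)). pose proof (IHs (fun x h => H x (or_intror h))). lra.
Qed.

Lemma lsum_ge0 {K} (f : K -> R) s : (forall x, 0 <= f x) -> 0 <= lsum f s.
Proof. induction s; simpl; intros. lra. pose proof (H a). pose proof (IHs H). lra. Qed.

Lemma lsum_plus {K} (f g : K -> R) s : lsum (fun x => f x + g x) s = lsum f s + lsum g s.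
Proof. induction s; simpl. lra. rewrite IHs. lra. Qed.

Lemma lsum_scal {K} (f : K -> R) c s : lsum (fun x => c * f x) s = c * lsum f s.
Proof. induction s; simpl. lra. rewrite IHs. lra. Qed.

Lemma lsum_app {K} (f : K -> R) s t : lsum f (s ++ t) = lsum f s + lsum f t.
Proof. induction s; simpl. lra. rewrite IHs. lra. Qed.

Lemma lsum_ext {K} (f g : K -> R) s : (forall x, f x = g x) -> lsum f s = lsum g s.
Proof. intros. induction s; simpl. auto. rewrite IHs, H. auto. Qed.

Lemma lsum_in {K} (f : K -> R) s z : (forall x, 0 <= f x) -> In z s -> f z <= lsum f s.
Proof.
  induction s; simpl; intros Hf Hin. contradiction.
  destruct Hin as [->|Hin]. pose proof (lsum_ge0 f s Hf). lra.
  pose proof (IHs Hf Hin). pose proof (Hf a). lra.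
Qed.

Lemma lsum_incl {K} (f : K -> R) t : NoDup t -> (forall x, 0 <= f x) ->
  forall s, (forall x, In x t -> In x s) -> lsum f t <= lsum f s.
Proof.
  induction t as [|a t IH]; intros Hnd Hf s Hinc.
  - simpl. apply lsum_ge0; auto.
  - inversion Hnd; subst.
    destruct (in_split a s (Hinc a (or_introl eq_refl))) as [s1 [s2 ->]].
    rewrite lsum_cons, lsum_app, lsum_cons.
    assert (lsum f t <= lsum f (s1 ++ s2)).
    { apply IH; auto. intros x Hx. assert (In x (s1 ++ a :: s2)) by (apply Hinc; right; auto).
      apply in_app_or in H. apply in_or_app. destruct H as [H|[H|H]]; auto. subst; contradiction. }
    rewrite lsum_app in H. lra.
Qed.

Definition inb {K} (s : list K) (x : K) : bool :=
  if excluded_middle_informative (In x s) then true else false.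

Lemma inb_true {K} (s : list K) x : inb s x = true <-> In x s.
Proof. unfold inb; destruct (excluded_middle_informative (In x s)); split; intros; auto; congruence. Qed.

Lemma lsum_filter {K} (f : K -> R) (b : K -> bool) t :
  lsum (fun x => if b x then f x else 0) t = lsum f (filter b t).
Proof. induction t; simpl. auto. destruct (b a); simpl; rewrite IHt; lra. Qed.

Lemma lsum_restrict {K} (f : K -> R) s t : NoDup t -> (forall x, 0 <= f x) ->
  lsum (fun x => if inb s x then f x else 0) t <= lsum f s.
Proof.
  intros Hnd Hf. rewrite lsum_filter. apply lsum_incl; auto.
  apply NoDup_filter; auto. intros x Hx. apply filter_In in Hx. apply inb_true; tauto.
Qed.

Lemma lsum_tail {K} (f : K -> R) s t : NoDup t -> NoDup s ->
  exists u, NoDup u /\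
    lsum (fun x => if inb s x then 0 else f x) t + lsum f s = lsum f u.
Proof.
  intros Ht Hs. exists (filter (fun x => negb (inb s x)) t ++ s). split.
  - apply NoDup_app; auto. apply NoDup_filter; auto.
    intros a Ha. apply filter_In in Ha. destruct Ha as [_ Ha].
    intro Hin. apply inb_true in Hin. rewrite Hin in Ha. discriminate.
  - rewrite lsum_app, <- lsum_filter. f_equal. apply lsum_ext. intros x.
    destruct (inb s x); simpl; auto.
Qed.

Lemma uniform_N {K} (P : nat -> K -> Prop) (s : list K) :
  (forall n m x, (n <= m)%nat -> P n x -> P m x) ->
  (forall x, exists N, P N x) -> exists N, forall x, In x s -> P N x.
Proof.
  intros Hmono Hex. induction s as [|a s IH].
  - exists 0%nat; simpl; tauto.
  - destruct IH as [N1 HN1]. destruct (Hex a) as [N2 HN2].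
    exists (Nat.max N1 N2). intros x [->|Hx].
    + apply Hmono with N2; auto. apply Nat.le_max_r.
    + apply Hmono with N1; auto. apply Nat.le_max_l.
Qed.

Section Norms.
Variable K : Type.
Variable H : DiscreteHypergroup K.
Variable p : R.
Hypothesis hp : 1 <= p.

Definition mu := haar H.
Definition Ps (f : K -> C) (s : list K) := lsum (fun x => rpow (Cmod (f x)) p * mu x) s.
Definition L (f : K -> C) := in_Lp mu p f.
Definition Nrm (f : K -> C) := lp_sum mu p f.

Lemma mu_ge1 x : 1 <= mu x.
Proof.
  unfold mu, haar. set (c := conv H x (hinv H x) (hid H)).
  assert (Hc0 : c <> 0). { apply (conv_e_supp _ H). rewrite hinv_invol. auto. }
  assert (Hc1 : 0 <= c) by apply conv_ge0.
  destruct (conv_prob _ H x (hinv H x)) as [s [Hnd [Hsup Hsum]]].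
  assert (c <= 1). { rewrite <- Hsum. apply lsum_in. intros; apply conv_ge0. apply Hsup; auto. }
  rewrite <- Rinv_1 at 1. apply Rinv_le_contravar; lra.
Qed.

Lemma mu_pos x : 0 < mu x.
Proof. pose proof (mu_ge1 x); lra. Qed.

Lemma term_ge0 (f : K -> C) x : 0 <= rpow (Cmod (f x)) p * mu x.
Proof. pose proof (rpow_ge0 (Cmod (f x)) p); pose proof (mu_pos x); nra. Qed.

Lemma Ps_ge0 f s : 0 <= Ps f s.
Proof. apply lsum_ge0; intros; apply term_ge0. Qed.

Lemma N_props f : L f ->
  (forall s, NoDup s -> Ps f s <= Nrm f) /\
  (forall M, (forall s, NoDup s -> Ps f s <= M) -> Nrm f <= M).
Proof.
  intros [M HM]. unfold Nrm, lp_sum.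
  destruct (Lub_Rbar_correct (lp_partial mu p f)) as [Hub Hlub].
  assert (H0 : Rbar_le 0 (Lub_Rbar (lp_partial mu p f))).
  { apply Hub. exists nil. split. constructor. reflexivity. }
  assert (HM' : Rbar_le (Lub_Rbar (lp_partial mu p f)) M).
  { apply Hlub. intros r Hr. apply HM; auto. }
  destruct (Lub_Rbar (lp_partial mu p f)) as [l| |] eqn:E; simpl in H0, HM'; try contradiction.
  simpl. split.
  - intros s Hs. assert (Rbar_le (Ps f s) l).
    { apply Hub. exists s; split; auto. }
    simpl in H1. auto.
  - intros M' HM''. assert (Rbar_le l M').
    { apply Hlub. intros r [s [Hs ->]]. simpl. apply HM''; auto. }
    simpl in H1. auto.
Qed.

Lemma N_ub f s : L f -> NoDup s -> Ps f s <= Nrm f.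
Proof. intros Hf; apply (N_props f Hf). Qed.

Lemma N_ge0 f : L f -> 0 <= Nrm f.
Proof. intros Hf. apply Rle_trans with (Ps f nil). unfold Ps; simpl; lra. apply N_ub; auto. constructor. Qed.

Lemma N_bound f M : (forall s, NoDup s -> Ps f s <= M) -> L f /\ Nrm f <= M.
Proof.
  intros HM. assert (Hf : L f). { exists M. intros r [s [Hs ->]]. apply HM; auto. }
  split; auto. apply (N_props f Hf). auto.
Qed.

Lemma N_approx f eps : L f -> 0 < eps -> exists s, NoDup s /\ Nrm f - eps < Ps f s.
Proof.
  intros Hf He. apply NNPP. intro Hn.
  assert (Nrm f <= Nrm f - eps).
  { apply (N_props f Hf). intros s Hs. destruct (Rle_lt_dec (Ps f s) (Nrm f - eps)); auto.
    exfalso; apply Hn; exists s; auto. }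
  lra.
Qed.

Lemma N_point f x : L f -> rpow (Cmod (f x)) p <= Nrm f.
Proof.
  intros Hf. apply Rle_trans with (Ps f (x :: nil)).
  - unfold Ps; simpl. pose proof (mu_ge1 x). pose proof (rpow_ge0 (Cmod (f x)) p). nra.
  - apply N_ub; auto. constructor. simpl; tauto. constructor.
Qed.

Lemma N_dom2 f g1 g2 c : 0 <= c -> L g1 -> L g2 ->
  (forall x, rpow (Cmod (f x)) p <= c * (rpow (Cmod (g1 x)) p + rpow (Cmod (g2 x)) p)) ->
  L f /\ Nrm f <= c * (Nrm g1 + Nrm g2).
Proof.
  intros Hc H1 H2 Hpt. apply N_bound. intros s Hs.
  apply Rle_trans with (c * (Ps g1 s + Ps g2 s)).
  - unfold Ps. rewrite <- lsum_plus, <- lsum_scal. apply lsum_le. intros x _.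
    pose proof (mu_pos x). specialize (Hpt x). nra.
  - pose proof (N_ub g1 s H1 Hs). pose proof (N_ub g2 s H2 Hs). nra.
Qed.

Lemma N_dom1 f g c : 0 <= c -> L g ->
  (forall x, rpow (Cmod (f x)) p <= c * rpow (Cmod (g x)) p) ->
  L f /\ Nrm f <= c * Nrm g.
Proof.
  intros Hc Hg Hpt. apply N_bound. intros s Hs.
  apply Rle_trans with (c * Ps g s).
  - unfold Ps. rewrite <- lsum_scal. apply lsum_le. intros x _.
    pose proof (mu_pos x). specialize (Hpt x). nra.
  - pose proof (N_ub g s Hg Hs). nra.
Qed.

Lemma N_cong f g : (forall x, Cmod (f x) = Cmod (g x)) -> L g -> L f /\ Nrm f = Nrm g.
Proof.
  intros He Hg. destruct (N_dom1 f g 1 ltac:(lra) Hg) as [Hf Hfg].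
  { intros x; rewrite He; lra. }
  destruct (N_dom1 g f 1 ltac:(lra) Hf) as [_ Hgf].
  { intros x; rewrite He; lra. }
  split; auto. lra.
Qed.

End Norms.

Definition scal (r : R) (u : C) : C := (r * fst u, r * snd u).

Lemma scal_RtoC r u : scal r u = Cmult (RtoC r) u.
Proof. destruct u; unfold scal, Cmult, RtoC; simpl. f_equal; ring. Qed.

Lemma Cmod_scal r u : Cmod (scal r u) = Rabs r * Cmod u.
Proof. rewrite scal_RtoC, Cmod_mult, Cmod_R. auto. Qed.

Definition ph (u : C) : C := if Req_EM_T (Cmod u) 0 then (1, 0) else scal (/ Cmod u) u.

Lemma Cmod_ph u : Cmod (ph u) = 1.
Proof.
  unfold ph. destruct (Req_EM_T (Cmod u) 0).
  - change (1, 0)%R with (RtoC 1). apply Cmod_1.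
  - rewrite Cmod_scal. pose proof (Cmod_ge_0 u). rewrite Rabs_pos_eq.
    field; auto. left; apply Rinv_0_lt_compat; lra.
Qed.

Lemma ph_decomp u : u = scal (Cmod u) (ph u).
Proof.
  unfold ph. destruct (Req_EM_T (Cmod u) 0) as [e|n].
  - rewrite e. apply Cmod_eq_0 in e. subst. unfold scal, RtoC; simpl. f_equal; ring.
  - destruct u as [a b]. unfold scal; simpl. f_equal; field; auto.
Qed.

Lemma scal_minus a b v : Cminus (scal a v) (scal b v) = scal (a - b) v.
Proof. destruct v. unfold Cminus, Cplus, Copp, scal; simpl. f_equal; ring. Qed.

Lemma Cmod_scal_ph a u : Cmod (scal a (ph u)) = Rabs a.
Proof. rewrite Cmod_scal, Cmod_ph. ring. Qed.

Lemma Cmod_minus_sym a b : Cmod (Cminus a b) = Cmod (Cminus b a).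
Proof.
  replace (Cminus b a) with (Copp (Cminus a b)). apply eq_sym, Cmod_opp.
  destruct a, b. unfold Cminus, Cplus, Copp; simpl. f_equal; ring.
Qed.

Lemma Cmod_minus_tri a b c : Cmod (Cminus a c) <= Cmod (Cminus a b) + Cmod (Cminus b c).
Proof.
  replace (Cminus a c) with (Cplus (Cminus a b) (Cminus b c)). apply Cmod_triangle.
  destruct a, b, c. unfold Cminus, Cplus, Copp; simpl. f_equal; ring.
Qed.

Lemma Cmod_minus_le a b : Cmod (Cminus a b) <= Cmod a + Cmod b.
Proof.
  unfold Cminus. eapply Rle_trans. apply Cmod_triangle. rewrite Cmod_opp. lra.
Qed.

Lemma Cmod_rev_tri a b : Cmod a <= Cmod b + Cmod (Cminus a b).
Proof.
  replace a with (Cplus b (Cminus a b)) at 1. apply Cmod_triangle.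
  destruct a, b. unfold Cminus, Cplus, Copp; simpl. f_equal; ring.
Qed.

Lemma Cminus_self a : Cminus a a = (0, 0)%R.
Proof. destruct a. unfold Cminus, Cplus, Copp; simpl. f_equal; ring. Qed.

Section Dist.
Variable K : Type.
Variable H : DiscreteHypergroup K.
Variable p : R.
Hypothesis hp : 1 <= p.

Definition cdiff (f g : K -> C) := fun x => Cminus (f x) (g x).
Definition D (f g : K -> C) := Nrm K H p (cdiff f g).
Notation L := (L K H p).
Notation Q := (Qc p).

Lemma dist_D f g : lp_dist (haar H) p f g = rpow (D f g) (/ p).
Proof. reflexivity. Qed.

Lemma L_diff f g : L f -> L g -> L (cdiff f g).
Proof.
  intros Hf Hg. apply (N_dom2 K H p (cdiff f g) f g Q); auto.
  pose proof (Qc_ge1 p hp); lra.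
  intros x. unfold cdiff. eapply Rle_trans. apply rpow_le. lra.
  split. apply Cmod_ge_0. apply Cmod_minus_le.
  apply rpow_quasi; auto; apply Cmod_ge_0.
Qed.

Lemma L_from f g : L f -> L (cdiff f g) -> L g.
Proof.
  intros Hf Hd. apply (N_dom2 K H p g f (cdiff f g) Q); auto.
  pose proof (Qc_ge1 p hp); lra.
  intros x. unfold cdiff.
  apply Rle_trans with (rpow (Cmod (f x) + Cmod (Cminus (f x) (g x))) p).
  apply rpow_le. lra. split. apply Cmod_ge_0.
  rewrite (Cmod_minus_sym (f x)). apply (Cmod_rev_tri (g x) (f x)).
  apply rpow_quasi; auto; apply Cmod_ge_0.
Qed.

Lemma D_sym f g : L f -> L g -> D f g = D g f.
Proof.
  intros Hf Hg. unfold D. apply (N_cong K H p). intros x; unfold cdiff; apply Cmod_minus_sym.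
  apply L_diff; auto.
Qed.

Lemma D_ge0 f g : L f -> L g -> 0 <= D f g.
Proof. intros. apply N_ge0. apply L_diff; auto. Qed.

Lemma D_tri a b c : L a -> L b -> L c -> D a c <= Q * (D a b + D b c).
Proof.
  intros Ha Hb Hc. unfold D. apply (N_dom2 K H p (cdiff a c) (cdiff a b) (cdiff b c) Q).
  pose proof (Qc_ge1 p hp); lra. apply L_diff; auto. apply L_diff; auto.
  intros x. unfold cdiff. eapply Rle_trans. apply rpow_le. lra.
  split. apply Cmod_ge_0. apply Cmod_minus_tri.
  apply rpow_quasi; auto; apply Cmod_ge_0.
Qed.

Lemma D_self a : D a a = 0.
Proof.
  unfold D. assert (HZ : forall s, NoDup s -> Ps K H p (cdiff a a) s <= 0).
  { intros s _. unfold Ps. apply Rle_trans with (lsum (fun _ => 0) s).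
    apply lsum_le. intros x _. unfold cdiff. rewrite Cminus_self.
    change (0,0)%R with (RtoC 0). rewrite Cmod_0, rpow_0. lra.
    induction s; simpl; lra. }
  destruct (N_bound K H p _ 0 HZ) as [HL HN]. pose proof (N_ge0 K H p _ HL). lra.
Qed.

Lemma D_point a b x : L a -> L b -> rpow (Cmod (Cminus (a x) (b x))) p <= D a b.
Proof. intros. apply (N_point K H p (cdiff a b)). apply L_diff; auto. Qed.

Lemma D_pos a b : L a -> L b -> a <> b -> 0 < D a b.
Proof.
  intros Ha Hb Hne. destruct (classic (exists x, a x <> b x)) as [[x Hx]|Hn].
  - eapply Rlt_le_trans. 2: apply (D_point a b x Ha Hb). apply rpow_pos.
    apply Cmod_gt_0. intro E. apply Hx. destruct (a x), (b x). unfold Cminus, Cplus, Copp in E.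
    simpl in E. injection E; intros. f_equal; lra.
  - exfalso. apply Hne. apply functional_extensionality. intros x.
    apply NNPP. intro; apply Hn; eauto.
Qed.

End Dist.

Lemma div_le_aux r a b : 0 < a <= b -> 0 <= r -> r / b <= r / a.
Proof.
  intros [Ha Hab] Hr. unfold Rdiv. apply Rmult_le_compat_l; auto.
  apply Rinv_le_contravar; auto.
Qed.

Lemma rpow_1_base q : rpow 1 q = 1.
Proof. unfold rpow. destruct (Req_EM_T 1 0). lra. unfold Rpower. rewrite ln_1, Rmult_0_r. apply exp_0. Qed.

Section Step.
Variable K : Type.
Variable H : DiscreteHypergroup K.
Variable p : R.
Hypothesis hp : 1 <= p.
Variable lam : R.
Hypothesis Hlam : 0 < lam < 1.

Notation L := (L K H p).
Notation Q := (Qc p).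
Notation D := (D K H p).
Notation muK := (mu K H).
Definition Y (h : K -> R) (f : K -> C) := forall x, h x <= Cmod (f x).

Definition Lam := rpow lam p.
Definition kp := Lam / (4 * Q).
Definition kap := rpow kp (/ p).

Lemma p_pos : 0 < p. Proof. lra. Qed.
Lemma Q_ge1 : 1 <= Q. Proof. apply Qc_ge1; auto. Qed.
Lemma Lam_pos : 0 < Lam. Proof. unfold Lam; apply rpow_pos; lra. Qed.
Lemma Lam_lt1 : Lam < 1. Proof. unfold Lam. pose proof (rpow_small lam p hp). lra. Qed.
Lemma kp_pos : 0 < kp.
Proof. unfold kp. pose proof Lam_pos. pose proof Q_ge1. apply Rdiv_lt_0_compat; lra. Qed.
Lemma kp_le1 : kp <= 1.
Proof.
  unfold kp. pose proof Lam_lt1. pose proof Lam_pos. pose proof Q_ge1.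
  apply Rle_trans with (Lam / 1). apply div_le_aux; lra. lra.
Qed.
Lemma kap_pos : 0 < kap. Proof. unfold kap; apply rpow_pos, kp_pos. Qed.
Lemma kap_p : rpow kap p = kp.
Proof. unfold kap. apply rpow_inv'. apply p_pos. pose proof kp_pos; lra. Qed.
Lemma Qkp : Q * kp = Lam / 4.
Proof. unfold kp. pose proof Q_ge1. field. lra. Qed.

Definition push (h : K -> R) (y : K -> C) : K -> C :=
  fun x => if Rle_dec (h x) (Cmod (y x)) then y x else scal (h x) (ph (y x)).

Lemma NP (h W : K -> R) (delta : R) f y :
  0 < delta -> (forall x, 0 <= h x) -> (forall x, 0 <= W x) ->
  (forall x, delta <= W x \/ h x <= kap * W x) ->
  L f -> Y (fun x => h x + W x) f -> L y -> D f y < rpow delta p ->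
  L (push h y) /\ Y h (push h y) /\ D y (push h y) <= kp * D f y.
Proof.
  intros Hd0 Hh HW Hcase Hf HYf Hy HD.
  assert (Hu : forall x, Cmod (Cminus (f x) (y x)) < delta).
  { intros x. apply (rpow_lt_rev _ _ p). apply p_pos. apply Cmod_ge_0. lra.
    eapply Rle_lt_trans. apply (D_point K H); auto. auto. }
  assert (Hdef : forall x, Cmod (Cminus (y x) (push h y x)) <= kap * Cmod (Cminus (f x) (y x))).
  { intros x. unfold push. pose proof kap_pos.
    pose proof (Cmod_ge_0 (Cminus (f x) (y x))).
    destruct (Rle_dec (h x) (Cmod (y x))) as [Hle|Hnle].
    - rewrite Cminus_self. change (0,0)%R with (RtoC 0). rewrite Cmod_0. nra.
    - pattern (y x) at 1. rewrite (ph_decomp (y x)). rewrite scal_minus, Cmod_scal_ph.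
      pose proof (Cmod_ge_0 (y x)). rewrite Rabs_left1 by lra.
      specialize (HYf x). simpl in HYf. pose proof (Cmod_rev_tri (f x) (y x)).
      specialize (Hu x). specialize (Hh x). specialize (HW x).
      destruct (Hcase x) as [Hc|Hc]. lra.
      destruct (Rle_lt_dec (Cmod (Cminus (f x) (y x))) (W x)). lra.
      assert (kap * W x < kap * Cmod (Cminus (f x) (y x))) by (apply Rmult_lt_compat_l; lra).
      lra. }
  assert (Hz : L (cdiff K y (push h y)) /\ Nrm K H p (cdiff K y (push h y)) <= kp * Nrm K H p (cdiff K f y)).
  { apply N_dom1. pose proof kp_pos; lra. apply (L_diff K H p hp); auto.
    intros x. unfold cdiff. rewrite <- kap_p, <- rpow_mult.
    apply rpow_le. apply p_pos. split. apply Cmod_ge_0. apply Hdef.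
    pose proof kap_pos; lra. apply Cmod_ge_0. }
  destruct Hz as [Hz1 Hz2]. split; [|split].
  - apply (L_from K H p hp y); auto.
  - intros x. unfold push. destruct (Rle_dec (h x) (Cmod (y x))); auto.
    rewrite Cmod_scal_ph. rewrite Rabs_pos_eq; auto. lra.
  - exact Hz2.
Qed.

Definition Wf (s : list K) (delta : R) (h : K -> R) : K -> R :=
  fun x => if inb s x then delta else h x / kap.
Definition cp (c : K -> C) (W : K -> R) : K -> C :=
  fun x => scal (Cmod (c x) + W x) (ph (c x)).

Lemma Wf_ge0 s delta h : 0 < delta -> (forall x, 0 <= h x) -> forall x, 0 <= Wf s delta h x.
Proof.
  intros Hd Hh x. unfold Wf. destruct (inb s x). lra.
  pose proof kap_pos. specialize (Hh x). unfold Rdiv. apply Rmult_le_pos; auto.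
  left; apply Rinv_0_lt_compat; auto.
Qed.

Lemma Wf_case s delta h : forall x, delta <= Wf s delta h x \/ h x <= kap * Wf s delta h x.
Proof.
  intros x. unfold Wf. destruct (inb s x). left; lra. right. pose proof kap_pos.
  right. field. lra.
Qed.

Lemma rpow_inv_kap : rpow (/ kap) p = / kp.
Proof.
  pose proof kap_pos. pose proof kp_pos.
  assert (rpow (/ kap) p * rpow kap p = 1).
  { rewrite <- rpow_mult. rewrite Rinv_l by lra. apply rpow_1_base.
    left; apply Rinv_0_lt_compat; auto. lra. }
  rewrite kap_p in H2. apply (Rmult_eq_reg_r kp); [|lra]. rewrite H2. field. lra.
Qed.

Lemma cp_diff c W x : 0 <= W x -> Cmod (Cminus (c x) (cp c W x)) = W x.
Proof.
  intros HW. unfold cp. pattern (c x) at 1. rewrite (ph_decomp (c x)).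
  rewrite scal_minus, Cmod_scal_ph. rewrite Rabs_left1. lra.
  lra.
Qed.

Lemma cp_mod c W x : 0 <= W x -> Cmod (cp c W x) = Cmod (c x) + W x.
Proof.
  intros HW. unfold cp. rewrite Cmod_scal_ph. apply Rabs_pos_eq.
  pose proof (Cmod_ge_0 (c x)); lra.
Qed.

Lemma perturb h c beta : (forall x, 0 <= h x) -> L c -> Y h c -> 0 < beta ->
  exists s delta, 0 < delta /\
    L (cp c (Wf s delta h)) /\ Y (fun x => h x + Wf s delta h x) (cp c (Wf s delta h)) /\
    D c (cp c (Wf s delta h)) <= beta.
Proof.
  intros Hh Hc HY Hb.
  pose proof kp_pos as Hkp.
  destruct (N_approx K H p c (kp * beta / 2) Hc) as [s [Hs Happ]].
  { apply Rmult_lt_0_compat; [nra|lra]. }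
  set (S := lsum muK s).
  assert (HS : 0 <= S). { apply lsum_ge0. intros; pose proof (mu_pos K H x); lra. }
  set (delta := Rmin 1 (beta / 2 / (1 + S))).
  assert (Hd0 : 0 < delta).
  { unfold delta, Rmin. destruct (Rle_dec 1 (beta / 2 / (1 + S))). lra.
    apply Rdiv_lt_0_compat; lra. }
  assert (Hd1 : delta <= 1) by (unfold delta; apply Rmin_l).
  assert (Hd2 : delta * S <= beta / 2).
  { assert (delta <= beta / 2 / (1 + S)) by (unfold delta; apply Rmin_r).
    assert (delta * (1 + S) <= beta / 2).
    { apply Rle_trans with (beta / 2 / (1 + S) * (1 + S)). apply Rmult_le_compat_r; lra.
      right; field; lra. }
    nra. }
  assert (Hrd : rpow delta p <= delta) by (apply rpow_small; lra).
  exists s, delta. set (W := Wf s delta h).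
  assert (HW : forall x, 0 <= W x) by (apply Wf_ge0; auto).
  assert (Hbd : L (cdiff K c (cp c W)) /\ Nrm K H p (cdiff K c (cp c W)) <= beta).
  { apply N_bound. intros t Ht. unfold Ps, cdiff.
    apply Rle_trans with
      (lsum (fun x => (if inb s x then rpow delta p * muK x else 0) +
                      / kp * (if inb s x then 0 else rpow (Cmod (c x)) p * muK x)) t).
    - apply lsum_le. intros x _. rewrite cp_diff by auto. unfold W, Wf.
      destruct (inb s x). lra.
      rewrite Rplus_0_l.       unfold Rdiv. rewrite rpow_mult.
      rewrite rpow_inv_kap. pose proof (mu_pos K H x).
      assert (rpow (h x) p <= rpow (Cmod (c x)) p) by (apply rpow_le; [lra|split; auto]).
      assert (0 < / kp) by (apply Rinv_0_lt_compat; auto).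
      replace (rpow (h x) p * / kp * muK x) with (/ kp * (rpow (h x) p * muK x)) by ring.
      apply Rmult_le_compat_l. lra. apply Rmult_le_compat_r; lra.
      auto. left; apply Rinv_0_lt_compat; apply kap_pos.
    - rewrite lsum_plus, lsum_scal.
      assert (H1 : lsum (fun x => if inb s x then rpow delta p * muK x else 0) t <= rpow delta p * S).
      { unfold S. rewrite <- lsum_scal. apply lsum_restrict; auto.
        intros x. pose proof (mu_pos K H x). pose proof (rpow_ge0 delta p). nra. }
      destruct (lsum_tail (fun x => rpow (Cmod (c x)) p * muK x) s t Ht Hs) as [u [Hu Heq]].
      assert (H2 : lsum (fun x => rpow (Cmod (c x)) p * muK x) u <= Nrm K H p c).
      { apply (N_ub K H p c u Hc Hu). }
      unfold Ps in Happ.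
      assert (H3 : lsum (fun x => if inb s x then 0 else rpow (Cmod (c x)) p * muK x) t < kp * beta / 2).
      { lra. }
      assert (H4 : / kp * lsum (fun x => if inb s x then 0 else rpow (Cmod (c x)) p * muK x) t <= beta / 2).
      { apply Rle_trans with (/ kp * (kp * beta / 2)).
        apply Rmult_le_compat_l. left; apply Rinv_0_lt_compat; auto. lra.
        right; field; lra. }
      pose proof (rpow_ge0 delta p). nra. }
  destruct Hbd as [HL HN]. split; auto. split; [|split].
  - apply (L_from K H p hp c); auto.
  - intros x. simpl. rewrite cp_mod by auto. specialize (HY x). lra.
  - exact HN.
Qed.

End Step.

Section Step2.
Variable K : Type.
Variable H : DiscreteHypergroup K.
Variable p : R.
Hypothesis hp : 1 <= p.
Variable lam : R.
Hypothesis Hlam : 0 < lam < 1.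

Notation L := (L K H p).
Notation Q := (Qc p).
Notation D := (D K H p).
Notation Y := (Y K).

Lemma Dtri a b c : L a -> L b -> L c -> D a c <= Q * (D a b + D b c).
Proof. apply (D_tri K H p hp). Qed.

Lemma ball_transfer c c2 rho rho2 : 0 < rho -> L c -> L c2 -> D c c2 <= rho / (2 * Q) -> rho2 <= rho / (2 * Q) ->
  forall w, L w -> D c2 w <= rho2 -> D c w <= rho.
Proof.
  intros Hr Hc Hc2 H1 H2 w Hw H3. pose proof (Q_ge1 p hp).
  eapply Rle_trans. apply (Dtri c c2 w); auto.
  apply Rle_trans with (Q * (rho / (2 * Q) + rho / (2 * Q))).
  apply Rmult_le_compat_l; lra. right; field; lra.
Qed.

Lemma step (A : (K -> C) -> Prop) (HA : porous L (lp_dist (mu K H) p) lam A) h c rho :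
  (forall x, 0 <= h x) -> L c -> Y h c -> 0 < rho ->
  exists h2 c2 rho2, (forall x, 0 <= h2 x) /\ (forall x, h x <= h2 x) /\ L c2 /\ Y h2 c2 /\
    0 < rho2 /\ rho2 <= rho / 2 /\
    (forall w, L w -> D c2 w <= rho2 -> D c w <= rho) /\
    (forall w, L w -> Y h2 w -> D c2 w <= Q * rho2 -> ~ A w).
Proof.
  intros Hh Hc HY Hr. pose proof (Q_ge1 p hp) as HQ.
  assert (HQ2 : rho / (2 * Q) <= rho / 2).
  { apply div_le_aux; lra. }
  assert (HQ2p : 0 < rho / (2 * Q)) by (apply Rdiv_lt_0_compat; lra).
  set (beta := rho / (6 * Q * Q)). set (sigma := rho / (6 * Q * Q * Q)).
  set (tau := rho / (12 * Q * Q * Q * Q)).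
  assert (Hb : 0 < beta) by (apply Rdiv_lt_0_compat; nra).
  assert (Hs : 0 < sigma) by (apply Rdiv_lt_0_compat; repeat apply Rmult_lt_0_compat; lra).
  assert (Ht : 0 < tau) by (apply Rdiv_lt_0_compat; repeat apply Rmult_lt_0_compat; lra).
  destruct (perturb K H p hp lam Hlam h c beta Hh Hc HY Hb) as [s [delta [Hd [HLc' [HYc' HDc']]]]].
  set (W := Wf K p lam s delta h) in *. set (c' := cp K c W) in *.
  assert (HW : forall x, 0 <= W x) by (apply Wf_ge0; auto).
  destruct (classic (exists a, A a /\ L a /\ Y (fun x => h x + W x) a /\ D c' a <= sigma))
    as [[a [HAa [HLa [HYa HDa]]]] | Hno].
  - destruct HA as [_ HApor]. specialize (HApor a HAa).
    set (tau' := Rmin tau (rpow delta p)).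
    assert (Htau' : 0 < tau').
    { unfold tau', Rmin. destruct (Rle_dec tau (rpow delta p)); auto. apply rpow_pos; auto. }
    destruct (HApor (rpow tau' (/ p))) as [y [HLy [Hne [Hdy Hhole]]]].
    { apply rpow_pos; auto. }
    rewrite dist_D in Hdy.
    assert (HT0 : 0 < (D a y)). { apply (D_pos K H p hp); auto. }
    assert (HTt : (D a y) < tau').
    { apply (rpow_lt_rev _ _ (/ p)); auto. apply Rinv_0_lt_compat; lra. lra. lra. }
    assert (HTtau : (D a y) <= tau) by (pose proof (Rmin_l tau (rpow delta p)); fold tau' in H0; lra).
    assert (HTd : (D a y) < rpow delta p) by (pose proof (Rmin_r tau (rpow delta p)); fold tau' in H0; lra).
    destruct (NP K H p hp lam Hlam h W delta a y Hd Hh HW (Wf_case K p hp lam Hlam s delta h) HLa HYa HLy HTd)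
      as [HLz [HYz HDz]].
    set (z := push K h y) in *.
    pose proof (kp_pos p hp lam Hlam) as Hkp. pose proof (kp_le1 p hp lam Hlam) as Hkp1.
    pose proof (Lam_pos p lam Hlam) as HLam.
    set (rho2 := Rmin (rho / (2 * Q)) (Lam p lam * (D a y) / (4 * Q * Q))).
    assert (Hr2a : rho2 <= rho / (2 * Q)) by apply Rmin_l.
    assert (Hr2b : rho2 <= Lam p lam * (D a y) / (4 * Q * Q)) by apply Rmin_r.
    assert (Hr2p : 0 < rho2).
    { unfold rho2, Rmin. destruct (Rle_dec _ _); auto. apply Rdiv_lt_0_compat; nra. }
    exists h, z, rho2. split; [auto|split; [intros; lra|split; [auto|split; [auto|]]]].
    split; [auto|split; [lra|split]].
    + apply (ball_transfer c z rho rho2); auto.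
      assert (Hyz : D y z <= (D a y)).
      { assert (kp p lam * (D a y) <= (D a y)) by (apply Rle_trans with (1*(D a y)); [apply Rmult_le_compat_r; lra | lra]). lra. }
      assert (Haz : D a z <= 2 * Q * tau).
      { eapply Rle_trans. apply (Dtri a y z); auto.
        apply Rle_trans with (Q * (tau + tau)). apply Rmult_le_compat_l; lra. lra. }
      assert (Hc'z : D c' z <= Q * (sigma + 2 * Q * tau)).
      { eapply Rle_trans. apply (Dtri c' a z); auto. apply Rmult_le_compat_l; lra. }
      eapply Rle_trans. apply (Dtri c c' z); auto.
      apply Rle_trans with (Q * (beta + Q * (sigma + 2 * Q * tau))).
      apply Rmult_le_compat_l; lra.
      right. unfold beta, sigma, tau. field. lra.
    + intros w HLw HYw HDw HAw. apply (Hhole w HLw); auto.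
      rewrite !dist_D.
      assert (HDyw : D y w < Lam p lam * (D a y)).
      { eapply Rle_lt_trans. apply (Dtri y z w); auto.
        assert (Q * (D y z + D z w) <= Q * (kp p lam * (D a y)) + Q * (Q * rho2)).
        { rewrite <- Rmult_plus_distr_l. apply Rmult_le_compat_l; lra. }
        assert (E1 : Q * (kp p lam * (D a y)) = Lam p lam * (D a y) / 4).
        { rewrite <- Rmult_assoc, (Qkp p hp lam Hlam). field. }
        assert (E2 : Q * (Q * rho2) <= Lam p lam * (D a y) / 4).
        { apply Rle_trans with (Q * (Q * (Lam p lam * (D a y) / (4 * Q * Q)))).
          apply Rmult_le_compat_l; [lra|]. apply Rmult_le_compat_l; lra.
          right; field; lra. }
        assert (0 < Lam p lam * D a y) by (apply Rmult_lt_0_compat; auto). lra. }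
      assert (HDyw0 : 0 <= D y w) by (apply (D_ge0 K H p hp); auto).
      apply Rlt_le_trans with (rpow (Lam p lam * (D a y)) (/ p)).
      apply rpow_lt. apply Rinv_0_lt_compat; lra. lra.
      rewrite rpow_mult by lra. unfold Lam. rewrite rpow_inv by lra. lra.
  - exists (fun x => h x + W x), c', (sigma / Q).
    split. intros x; pose proof (Hh x); pose proof (HW x); lra.
    split. intros x; pose proof (HW x); lra.
    split; auto. split; auto.
    assert (Hsq : sigma / Q <= rho / (2 * Q)).
    { unfold sigma. replace (rho / (6 * Q * Q * Q) / Q) with (rho / (6 * Q * Q * Q * Q)) by (field; lra).
      apply div_le_aux; [|lra]. split. lra. assert (1 <= Q*Q) by nra. assert (1 <= Q*Q*Q) by nra. nra. }
    split. apply Rdiv_lt_0_compat; lra. split. lra. split.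
    + apply (ball_transfer c c' rho (sigma / Q)); auto.
      eapply Rle_trans; eauto. unfold beta. apply div_le_aux; [|lra]. split. lra. nra.
    + intros w HLw HYw HDw HAw. apply Hno. exists w. repeat split; auto.
      replace (Q * (sigma / Q)) with sigma in HDw by (field; lra). auto.
Qed.

End Step2.

Lemma real_lim (u : nat -> R) :
  (forall eps, 0 < eps -> exists N, forall n m, (N <= n)%nat -> (N <= m)%nat -> Rabs (u n - u m) < eps) ->
  exists l, forall eps, 0 < eps -> exists N, forall n, (N <= n)%nat -> Rabs (u n - l) < eps.
Proof.
  intros Hc. assert (Hcc : ex_lim_seq_cauchy u).
  { intros [e He]. simpl. apply Hc; auto. }
  apply ex_lim_seq_cauchy_corr in Hcc. destruct Hcc as [l Hl].
  exists l. intros eps He. apply is_lim_seq_spec in Hl. destruct (Hl (mkposreal eps He)) as [N HN].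
  exists N. intros n Hn. apply HN; auto.
Qed.

Lemma sqrt2_le2 : sqrt 2 <= 2.
Proof. rewrite <- (sqrt_square 2) at 2 by lra. apply sqrt_le_1; lra. Qed.

Lemma Clim_ex (u : nat -> C) :
  (forall eps, 0 < eps -> exists N, forall n m, (N <= n)%nat -> (N <= m)%nat -> Cmod (Cminus (u n) (u m)) < eps) ->
  exists l, forall eps, 0 < eps -> exists N, forall n, (N <= n)%nat -> Cmod (Cminus (u n) l) < eps.
Proof.
  intros Hc.
  assert (H1 : exists l1, forall eps, 0 < eps -> exists N, forall n, (N <= n)%nat -> Rabs (fst (u n) - l1) < eps).
  { apply real_lim. intros eps He. destruct (Hc eps He) as [N HN]. exists N. intros n m Hn Hm.
    specialize (HN n m Hn Hm). pose proof (Rmax_Cmod (Cminus (u n) (u m))).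
    unfold Rmax in H. destruct (u n), (u m). simpl in *.
    unfold Rminus in *. destruct (Rle_dec _ _); lra. }
  assert (H2 : exists l2, forall eps, 0 < eps -> exists N, forall n, (N <= n)%nat -> Rabs (snd (u n) - l2) < eps).
  { apply real_lim. intros eps He. destruct (Hc eps He) as [N HN]. exists N. intros n m Hn Hm.
    specialize (HN n m Hn Hm). pose proof (Rmax_Cmod (Cminus (u n) (u m))).
    unfold Rmax in H. destruct (u n), (u m). simpl in *.
    unfold Rminus in *. destruct (Rle_dec _ _); lra. }
  destruct H1 as [l1 H1]. destruct H2 as [l2 H2]. exists (l1, l2).
  intros eps He. destruct (H1 (eps/2)) as [N1 HN1]. lra. destruct (H2 (eps/2)) as [N2 HN2]. lra.
  exists (Nat.max N1 N2). intros n Hn.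
  specialize (HN1 n ltac:(lia)). specialize (HN2 n ltac:(lia)).
  pose proof (Cmod_2Rmax (Cminus (u n) (l1, l2))). pose proof sqrt2_le2.
  assert (Rmax (Rabs (fst (Cminus (u n) (l1, l2)))) (Rabs (snd (Cminus (u n) (l1, l2)))) < eps / 2).
  { destruct (u n). simpl in *. unfold Rmax, Rminus in *. destruct (Rle_dec _ _); lra. }
  assert (0 <= Rmax (Rabs (fst (Cminus (u n) (l1, l2)))) (Rabs (snd (Cminus (u n) (l1, l2))))).
  { unfold Rmax. destruct (Rle_dec _ _); apply Rabs_pos. }
  pose proof (sqrt_pos 2). nra.
Qed.

Section Final.
Variable K : Type.
Variable H : DiscreteHypergroup K.
Variable p : R.
Hypothesis hp : 1 <= p.
Variable lam : R.
Hypothesis Hlam : 0 < lam < 1.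
Variable g : K -> C.
Hypothesis hg : in_Lp (haar H) p g.
Variable En : nat -> (K -> C) -> Prop.
Hypothesis HEn : forall n, porous (L K H p) (lp_dist (mu K H) p) lam (En n).
Hypothesis Hcov : forall f, (L K H p f /\ forall x, Cmod (g x) <= Cmod (f x)) <-> exists n, En n f.

Notation L := (L K H p).
Notation Q := (Qc p).
Notation D := (D K H p).
Notation Y := (Y K).

Definition St := ((K -> R) * (K -> C) * R)%type.
Definition sh (st : St) := fst (fst st).
Definition sc (st : St) := snd (fst st).
Definition sr (st : St) := snd st.

Definition Pre (st : St) := (forall x, 0 <= sh st x) /\ L (sc st) /\ Y (sh st) (sc st) /\ 0 < sr st.
Definition Post n (st st2 : St) := Pre st2 /\ (forall x, sh st x <= sh st2 x) /\ sr st2 <= sr st / 2 /\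
  (forall w, L w -> D (sc st2) w <= sr st2 -> D (sc st) w <= sr st) /\
  (forall w, L w -> Y (sh st2) w -> D (sc st2) w <= Q * sr st2 -> ~ En n w).

Lemma step' n st : exists st2, Pre st -> Post n st st2.
Proof.
  destruct (classic (Pre st)) as [[H1 [H2 [H3 H4]]]|Hn]; [|exists st; tauto].
  destruct (step K H p hp lam Hlam (En n) (HEn n) (sh st) (sc st) (sr st) H1 H2 H3 H4)
    as [h2 [c2 [r2 [A1 [A2 [A3 [A4 [A5 [A6 [A7 A8]]]]]]]]]].
  exists (h2, c2, r2). intros _. unfold Post, Pre, sh, sc, sr; simpl.
  repeat split; auto.
Qed.

Definition nxt n st : St := proj1_sig (constructive_indefinite_description _ (step' n st)).

Definition st0 : St := (fun x => Cmod (g x), g, 1).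

Fixpoint sq (k : nat) : St := match k with O => st0 | S k => nxt k (sq k) end.

Lemma sq_pre_post k : Pre (sq k) /\ Post k (sq k) (sq (S k)).
Proof.
  induction k.
  - assert (Pre (sq 0)).
    { unfold Pre, sh, sc, sr; simpl. repeat split; auto. intros; apply Cmod_ge_0.
      intros x; lra. lra. }
    split; auto. simpl. unfold nxt. destruct (constructive_indefinite_description _ _) as [s2 Hs2].
    simpl. apply Hs2; auto.
  - destruct IHk as [_ [HP _]]. split; auto.
    change (sq (S (S k))) with (nxt (S k) (sq (S k))). unfold nxt.
    destruct (constructive_indefinite_description _ _) as [s2 Hs2]. simpl. apply Hs2; auto.
Qed.

Definition c k := sc (sq k).
Definition r k := sr (sq k).
Definition hh k := sh (sq k).

Lemma Lc k : L (c k). Proof. apply (sq_pre_post k). Qed.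
Lemma rpos k : 0 < r k. Proof. apply (sq_pre_post k). Qed.

Lemma r_bound k : r k <= (/ 2) ^ k.
Proof.
  induction k. unfold r; simpl. unfold sr; simpl; lra.
  destruct (sq_pre_post k) as [_ [_ [_ [H3 _]]]]. unfold r in *. simpl (_ ^ _). lra.
Qed.

Lemma nested m k w : L w -> D (c (k + m)) w <= r (k + m) -> D (c k) w <= r k.
Proof.
  revert w. induction m; intros w Hw Hd.
  - rewrite Nat.add_0_r in Hd; auto.
  - apply IHm; auto. rewrite Nat.add_succ_r in Hd.
    destruct (sq_pre_post (k + m)) as [_ [_ [_ [_ [H4 _]]]]]. apply H4; auto.
Qed.

Lemma Dc k j : (k <= j)%nat -> D (c k) (c j) <= r k.
Proof.
  intros Hkj. replace j with (k + (j - k))%nat by lia. apply (nested (j - k)). apply Lc.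
  rewrite (D_self K H p). left; apply rpos.
Qed.

Lemma hh_mono k j x : (k <= j)%nat -> hh k x <= hh j x.
Proof.
  intros Hkj. replace j with (k + (j - k))%nat by lia. generalize (j - k)%nat as m.
  induction m. rewrite Nat.add_0_r; lra.
  rewrite Nat.add_succ_r. destruct (sq_pre_post (k + m)) as [_ [_ [H2 _]]].
  specialize (H2 x). unfold hh in *. lra.
Qed.

Lemma Yc k : Y (hh k) (c k). Proof. apply (sq_pre_post k). Qed.

Lemma r_small eps : 0 < eps -> exists N, r N < eps.
Proof.
  intros He. destruct (pow_lt_1_zero (/ 2)) with eps as [N HN]; auto.
  rewrite Rabs_pos_eq; lra. exists N. specialize (HN N (le_n N)).
  rewrite Rabs_pos_eq in HN. pose proof (r_bound N). lra.
  apply pow_le. lra.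
Qed.

Lemma pt_close k j x : (k <= j)%nat -> rpow (Cmod (Cminus (c k x) (c j x))) p <= r k.
Proof. intros. eapply Rle_trans. apply (D_point K H p hp). apply Lc. apply Lc. apply Dc; auto. Qed.

Lemma c_cauchy x : forall eps, 0 < eps -> exists N, forall n m, (N <= n)%nat -> (N <= m)%nat ->
  Cmod (Cminus (c n x) (c m x)) < eps.
Proof.
  intros eps He. destruct (r_small (rpow (eps / 2) p)) as [N HN]. apply rpow_pos; lra.
  exists N. intros n m Hn Hm.
  assert (A1 : Cmod (Cminus (c N x) (c n x)) < eps / 2).
  { apply (rpow_lt_rev _ _ p). lra. apply Cmod_ge_0. lra. eapply Rle_lt_trans. apply pt_close; auto. auto. }
  assert (A2 : Cmod (Cminus (c N x) (c m x)) < eps / 2).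
  { apply (rpow_lt_rev _ _ p). lra. apply Cmod_ge_0. lra. eapply Rle_lt_trans. apply pt_close; auto. auto. }
  pose proof (Cmod_minus_tri (c n x) (c N x) (c m x)). rewrite (Cmod_minus_sym (c n x) (c N x)) in H0. lra.
Qed.

Definition xl (x : K) : C := proj1_sig (constructive_indefinite_description _ (Clim_ex (fun k => c k x) (c_cauchy x))).

Lemma xl_spec x : forall eps, 0 < eps -> exists N, forall n, (N <= n)%nat -> Cmod (Cminus (c n x) (xl x)) < eps.
Proof. unfold xl. destruct (constructive_indefinite_description _ _) as [l Hl]. simpl. auto. Qed.

Lemma xl_Y k : Y (hh k) xl.
Proof.
  intros x. apply Rnot_lt_le; intro Hlt.
  destruct (xl_spec x (hh k x - Cmod (xl x))) as [N HN]. lra.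
  specialize (HN (Nat.max N k) (Nat.le_max_l _ _)).
  pose proof (Yc (Nat.max N k) x). pose proof (hh_mono k (Nat.max N k) x (Nat.le_max_r _ _)).
  pose proof (Cmod_rev_tri (c (Nat.max N k) x) (xl x)). lra.
Qed.

Lemma xl_D k : L (cdiff K (c k) xl) /\ D (c k) xl <= Q * r k.
Proof.
  pose proof (Qc_ge1 p hp) as HQ. pose proof (rpos k) as Hr.
  apply N_bound. intros t Ht.
  assert (Heta : forall eta, 0 < eta -> Ps K H p (cdiff K (c k) xl) t <= Q * r k + Q * eta).
  { intros eta He.
    set (S := lsum (mu K H) t).
    assert (HS : 0 <= S). { apply lsum_ge0. intros; pose proof (mu_pos K H x); lra. }
    set (e := Rmin 1 (eta / (1 + S))).
    assert (He0 : 0 < e).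
    { unfold e, Rmin. destruct (Rle_dec 1 (eta / (1 + S))). lra. apply Rdiv_lt_0_compat; lra. }
    assert (He1 : e <= 1) by (unfold e; apply Rmin_l).
    assert (HeS : e * S <= eta).
    { assert (e <= eta / (1 + S)) by (unfold e; apply Rmin_r).
      assert (e * (1 + S) <= eta).
      { apply Rle_trans with (eta / (1 + S) * (1 + S)). apply Rmult_le_compat_r; lra.
        right; field; lra. }
      nra. }
    destruct (uniform_N (fun n x => forall m, (n <= m)%nat -> Cmod (Cminus (c m x) (xl x)) < e) t)
      as [N0 HN0].
    { intros n m x Hnm Hp m' Hm'. apply Hp. lia. }
    { intros x. destruct (xl_spec x e He0) as [N HN]. exists N. auto. }
    set (n := Nat.max N0 k).
    apply Rle_trans with (Q * (Ps K H p (cdiff K (c k) (c n)) t +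
                               lsum (fun x => rpow (Cmod (Cminus (c n x) (xl x))) p * mu K H x) t)).
    - unfold Ps. rewrite <- lsum_plus, <- lsum_scal. apply lsum_le. intros x _.
      unfold cdiff. pose proof (mu_pos K H x).
      assert (rpow (Cmod (Cminus (c k x) (xl x))) p <=
              Q * (rpow (Cmod (Cminus (c k x) (c n x))) p + rpow (Cmod (Cminus (c n x) (xl x))) p)).
      { eapply Rle_trans. apply rpow_le. lra. split. apply Cmod_ge_0. apply Cmod_minus_tri.
        apply rpow_quasi; auto; apply Cmod_ge_0. }
      replace (Q * (rpow (Cmod (Cminus (c k x) (c n x))) p * mu K H x +
                    rpow (Cmod (Cminus (c n x) (xl x))) p * mu K H x))
        with ((Q * (rpow (Cmod (Cminus (c k x) (c n x))) p + rpow (Cmod (Cminus (c n x) (xl x))) p)) * mu K H x) by ring.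
      apply Rmult_le_compat_r; lra.
    - assert (HA : Ps K H p (cdiff K (c k) (c n)) t <= r k).
      { eapply Rle_trans. apply (N_ub K H p). apply (L_diff K H p hp); apply Lc. auto.
        apply Dc. unfold n; lia. }
      assert (HB : lsum (fun x => rpow (Cmod (Cminus (c n x) (xl x))) p * mu K H x) t <= e * S).
      { unfold S. rewrite <- lsum_scal. apply lsum_le. intros x Hx.
        specialize (HN0 x Hx n (Nat.le_max_l _ _)). pose proof (mu_pos K H x).
        assert (rpow (Cmod (Cminus (c n x) (xl x))) p <= e).
        { eapply Rle_trans. apply rpow_le. lra. split. apply Cmod_ge_0. left; exact HN0.
          apply rpow_small; lra. }
        apply Rmult_le_compat_r; lra. }
      assert (Q * (Ps K H p (cdiff K (c k) (c n)) t +
        lsum (fun x => rpow (Cmod (Cminus (c n x) (xl x))) p * mu K H x) t) <= Q * (r k + eta)).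
      { apply Rmult_le_compat_l; lra. }
      lra.
  }
  destruct (Rle_lt_dec (Ps K H p (cdiff K (c k) xl) t) (Q * r k)) as [|Hgt]; auto.
  exfalso. set (P0 := Ps K H p (cdiff K (c k) xl) t) in *.
  specialize (Heta ((P0 - Q * r k) / (2 * Q))).
  assert (0 < (P0 - Q * r k) / (2 * Q)) by (apply Rdiv_lt_0_compat; lra).
  specialize (Heta H0).
  replace (Q * ((P0 - Q * r k) / (2 * Q))) with ((P0 - Q * r k) / 2) in Heta by (field; lra).
  lra.
Qed.

Lemma the_contradiction : False.
Proof.
  destruct (xl_D 0) as [HL0 _].
  assert (HLx : L xl) by (apply (L_from K H p hp (c 0)); auto; apply Lc).
  assert (HE : exists n, En n xl).
  { apply Hcov. split; auto. intros x. apply (xl_Y 0 x). }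
  destruct HE as [n Hn].
  destruct (sq_pre_post n) as [_ [_ [_ [_ [_ Hav]]]]].
  apply (Hav xl); auto.
  - apply (xl_Y (S n)).
  - apply (xl_D (S n)).
Qed.

End Final.

Theorem proposition3p10 (K : Type) (H : DiscreteHypergroup K) (p : R)
  (hp : 1 <= p) (g : K -> C) (hg : in_Lp (haar H) p g) :
  forall lam : R, 0 < lam < 1 ->
    ~ sigma_porous (in_Lp (haar H) p) (lp_dist (haar H) p) lam
        (fun f => in_Lp (haar H) p f /\ forall x, Cmod (g x) <= Cmod (f x)).
Proof.
  intros lam Hlam [En [HEn Hcov]].
  exact (the_contradiction K H p hp lam Hlam g hg En HEn Hcov).
Qed.
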